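(* Let $\tilde h_n(q)=q^{n(n-1)/2}h_n(q^{-1})$ for $n\ge 0$ and $\tilde h(q,s)=\sum_{n\ge0}\tilde h_n(q)s^n$. Then, as formal power series in $s$, $$\tilde h(q,s)=\cfrac{1}{1-\gamma_0 s-\cfrac{\lambda_0 s^2}{1-\gamma_1 s-\cfrac{\lambda_1 s^2}{1-\gamma_2 s-\cdots}}},\qquad \gamma_m=\binom{m+1}{1}_{\!q}^{2},\quad \lambda_m=q\binom{m+2}{2}_{\!q}^{2}\ (m\ge0),$$ i.e. $$\tilde h(q,s)=\cfrac{1}{1-s-\cfrac{qs^2}{1-\binom{2}{1}_q^2 s-\cfrac{q\binom{3}{2}_q^2s^2}{1-\binom{3}{1}_q^2s-\cfrac{q\binom{4}{2}_q^2s^2}{1-\binom{4}{1}_q^2 s-\cdots}}}}.$$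
   Context: Gaussian binomial coefficients: for $m\ge k\ge 0$, $\binom{m}{k}_q=\frac{[m]_q!}{[k]_q!\,[m-k]_q!}$ with $[m]_q!=\prod_{i=1}^m\frac{1-q^i}{1-q}$; set $\binom{m}{k}_q=0$ if $k>m$ or $k<0$. Let $W$ be an $n$-dimensional complex vector space with basis $w_1,\dots,w_n$, and $pr_k:W\to W$ the projection with $pr_k(\sum_i c_iw_i)=\sum_{i\ne k}c_iw_i$. The degenerate flag variety $\mathrm{Fl}^a_n$ is the variety of tuples $(V_1,\dots,V_{n-1})$ of subspaces of $W$ with $\dim V_k=k$ and $pr_{k+1}V_k\subset V_{k+1}$ for $k=1,\dots,n-2$. It admits a cellular decomposition into complex affine cells, so its Poincaré polynomial $P(t)$ involves only even powers of $t$; define $h_n(q)=P(q^{1/2})$, a polynomial of degree $n(n-1)/2$ with $h_0(q)=h_1(q)=1$. It is known (Cerulli Irelli–Feigin–Reineke) that $$h_n(q)=\sum_{f_1,\dots,f_{n-1}\ge 0} q^{\sum_{k=1}^{n-1}(k-f_k)(1-f_k+f_{k+1})}\prod_{k=1}^{n-1}\binom{1+f_{k-1}}{f_k}_{\!q}\prod_{k=1}^{n-1}\binom{1+f_{k+1}}{f_k}_{\!q},$$ with the convention $f_0=f_n=0$. *)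

(* Defs.v *)
(* Polynomials in q are {poly rat}; formal power series in s
   with coefficients in {poly rat} are functions nat -> {poly rat}. *)
From HB Require Import structures.
From mathcomp Require Import all_boot all_order all_algebra.
Set Implicit Arguments. Unset Strict Implicit. Unset Printing Implicit Defensive.
Import Order.TTheory GRing.Theory Num.Theory.
Local Open Scope ring_scope.

Definition qint (i : nat) : {poly rat} := \sum_(j < i) 'X^j.
Definition qfact (m : nat) : {poly rat} := \prod_(i < m) qint i.+1.
Definition qbin (m k : nat) : {poly rat} :=
  if (k <= m)%N then qfact m %/ (qfact k * qfact (m - k)) else 0.

(* f : {ffun 'I_m -> 'I_n} encodes (f_1,...,f_m); fv f k = f_k, with
   f_0 = 0 and f_k = 0 for k > m. *)
Definition fv (m n : nat) (f : {ffun 'I_m -> 'I_n}) (k : nat) : nat :=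
  match k with
  | 0 => 0%N
  | k'.+1 => if insub k' is Some i then nat_of_ord (f i) else 0%N
  end.

Definition hexp (n : nat) (f : {ffun 'I_n.-1 -> 'I_n}) : nat :=
  (\sum_(k < n.-1) (k.+1 - fv f k.+1) * (1 + fv f k.+2 - fv f k.+1))%N.

(* Cerulli Irelli–Feigin–Reineke formula for h_n(q); the f_k range over
   0 <= f_k < n (all other tuples give zero terms). *)
Definition h (n : nat) : {poly rat} :=
  \sum_(f : {ffun 'I_n.-1 -> 'I_n})
     'X^(hexp f) *
     \prod_(k < n.-1) (qbin (1 + fv f k) (fv f k.+1)
                       * qbin (1 + fv f k.+2) (fv f k.+1)).

(* htilde_n(q) = q^(n(n-1)/2) h_n(q^-1), i.e. the coefficient reversal of h_n
   with respect to degree N = n(n-1)/2 (deg h_n = N). *)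
Definition htilde (n : nat) : {poly rat} :=
  let N := ((n * n.-1) %/ 2)%N in \poly_(i < N.+1) (h n)`_(N - i).

Definition fps := nat -> {poly rat}.
Definition fconst (c : {poly rat}) : fps := fun n => if n is 0 then c else 0.
Definition fs : fps := fun n => (n == 1%N)%:R.
Definition fsub (a b : fps) : fps := fun n => a n - b n.
Definition fmul (a b : fps) : fps := fun n => \sum_(i < n.+1) a i * b (n - i)%N.

(* F is a tail system of the J-fraction with coefficients gam, lam:
   F_m * (1 - gam_m s - lam_m s^2 F_{m+1}) = 1 for all m, i.e.
   F_m = 1/(1 - gam_m s - lam_m s^2 F_{m+1}).  The value of the infinite
   continued fraction is F_0 (such a system exists and is unique). *)
Definition jfrac_system (gam lam : nat -> {poly rat}) (F : nat -> fps) : Prop :=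
  forall m : nat,
    fmul (F m) (fsub (fsub (fconst 1) (fmul (fconst (gam m)) fs))
                     (fmul (fconst (lam m)) (fmul (fmul fs fs) (F m.+1))))
    =1 fconst 1.

Definition gam (m : nat) : {poly rat} := qbin m.+1 1 ^+ 2.
Definition lam (m : nat) : {poly rat} := 'X * qbin m.+2 2 ^+ 2.

(* Main.v *)
Require Import Defs.
From HB Require Import structures.
From mathcomp Require Import all_boot all_order all_algebra.
From mathcomp Require Import zify ring lra.
Import Order.TTheory GRing.Theory Num.Theory.
Local Open Scope ring_scope.

Lemma qint_at1 k : (qint k).[1] = k%:R.
Proof.
rewrite /qint horner_sum.
under eq_bigr do rewrite hornerXn expr1n.
by rewrite sumr_const card_ord.
Qed.

Lemma qint_neq0 k : qint k.+1 != 0.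
Proof.
apply/negP => /eqP H; have := qint_at1 k.+1; rewrite H horner0 => /eqP.
by rewrite eq_sym pnatr_eq0.
Qed.

Lemma qfact_neq0 m : qfact m != 0.
Proof.
rewrite /qfact prodf_seq_neq0; apply/allP => i _ /=; exact: qint_neq0.
Qed.

Lemma qfactS m : qfact m.+1 = qfact m * qint m.+1.
Proof. by rewrite /qfact big_ord_recr. Qed.

Lemma qfact0 : qfact 0 = 1.
Proof. by rewrite /qfact big_ord0. Qed.

Lemma qint0 : qint 0 = 0. Proof. by rewrite /qint big_ord0. Qed.
Lemma qint1 : qint 1 = 1. Proof. by rewrite /qint big_ord1 expr0. Qed.

Lemma qintSr k : qint k.+1 = qint k + 'X^k.
Proof. by rewrite /qint big_ord_recr. Qed.

Lemma qintSl k : qint k.+1 = 1 + 'X * qint k.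
Proof.
rewrite /qint big_ord_recl expr0 mulr_sumr; congr (_ + _).
by apply: eq_bigr => i _; rewrite /bump /= exprS.
Qed.

Lemma qfact1 : qfact 1 = 1.
Proof. by rewrite qfactS qfact0 qint1 mulr1. Qed.

Lemma qbin_m0 m : qbin m 0 = 1.
Proof. by rewrite /qbin leq0n qfact0 subn0 mul1r divpp // qfact_neq0. Qed.

Lemma qbin_mm m : qbin m m = 1.
Proof. by rewrite /qbin leqnn subnn qfact0 mulr1 divpp // qfact_neq0. Qed.

Lemma qbin_gt m k : (m < k)%N -> qbin m k = 0.
Proof. by rewrite /qbin ltnNge => /negbTE ->. Qed.

Lemma qbin_S1 m : qbin m.+1 m = qint m.+1.
Proof.
rewrite /qbin leqnSn subSnn qfact1 mulr1 qfactS mulrC mulpK //.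
exact: qfact_neq0.
Qed.

Lemma qbin_1 m : qbin m.+1 1 = qint m.+1.
Proof.
rewrite /qbin ltnS leq0n subSS subn0 qfact1 mul1r qfactS mulrC mulpK //.
exact: qfact_neq0.
Qed.

Fixpoint B2 (m : nat) : {poly rat} :=
  if m is m'.+1 then B2 m' + 'X^m * qint m.+1 else 1.

Lemma B2E m : (1 + 'X) * B2 m = qint m.+1 * qint m.+2.
Proof.
elim: m => [|m IH] /=.
  by rewrite qint1 mul1r mulr1 qintSr qint1 expr1.
rewrite mulrDr IH.
rewrite [qint m.+2 in LHS]qintSr [qint m.+3]qintSr [qint m.+2 in RHS]qintSr.
rewrite !exprS; ring.
Qed.

Lemma qfact2 : qfact 2 = 1 + 'X.
Proof. by rewrite qfactS qfact1 mul1r qintSr qint1 expr1. Qed.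

Lemma qbin_2 m : qbin m.+2 2 = B2 m.
Proof.
rewrite /qbin !ltnS leq0n subSS subSS subn0 qfact2 (qfactS m.+1) (qfactS m) -mulrA -B2E.
have -> : qfact m * ((1 + 'X) * B2 m) = B2 m * ((1 + 'X) * qfact m) by ring.
by rewrite mulpK // mulf_neq0 // ?qfact_neq0 // -qfact2 qfact_neq0.
Qed.

Lemma qbin_Sm m : qbin m.+2 m = B2 m.
Proof.
rewrite /qbin leqW ?leqnSn // subSn ?leqnSn // subSnn qfact2 (qfactS m.+1) (qfactS m) -mulrA -B2E.
have -> : qfact m * ((1 + 'X) * B2 m) = B2 m * (qfact m * (1 + 'X)) by ring.
by rewrite mulpK // mulf_neq0 // ?qfact_neq0 // -qfact2 qfact_neq0.
Qed.

Definition uu k : {poly rat} := 'X * qbin k.+2 2.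
Definition dd k : {poly rat} := qbin k.+2 2.

Fixpoint A (m L b : nat) {struct L} : {poly rat} :=
  match L with
  | 0 => (b == 0)%:R
  | L'.+1 => A m L' b * gam (m + b)
             + (if b is b'.+1 then A m L' b' * uu (m + b') else 0)
             + A m L' b.+1 * dd (m + b)
  end.

Lemma A_gt m L b : (L < b)%N -> A m L b = 0.
Proof.
elim: L b => [|L IH] [|b] //= Hb.
rewrite !IH ?mul0r ?addr0 //; lia.
Qed.

Lemma AD m L b : A m L b.+1 =
  \sum_(j < L) A m j 0 * uu m * A m.+1 (L - j.+1) b.
Proof.
elim: L b => [|L IH] b; first by rewrite big_ord0.
rewrite big_ord_recr /= subnn.
under eq_bigr => j _ do rewrite /= subSS -(subnSK (ltn_ord j)) /=.
case: b => [|b].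
  rewrite !IH addn0 addn1 !mulr_suml.
  rewrite [in RHS](eq_bigr (fun j : 'I_L => A m j 0 * uu m * A m.+1 (L - j.+1) 0 * gam m.+1
     + A m j 0 * uu m * A m.+1 (L - j.+1) 1 * dd m.+1)); last first.
    by move=> j _; rewrite !addn0; ring.
  rewrite big_split /= mulr1; ring.
rewrite !IH /= mulr0 addr0 !mulr_suml.
rewrite [in RHS](eq_bigr (fun j : 'I_L => A m j 0 * uu m * A m.+1 (L - j.+1) b.+1 * gam (m + b.+2)
     + A m j 0 * uu m * A m.+1 (L - j.+1) b * uu (m + b.+1)
     + A m j 0 * uu m * A m.+1 (L - j.+1) b.+2 * dd (m + b.+2))); last first.
  by move=> j _; rewrite !addSn !addnS; ring.
by rewrite !big_split.
Qed.

Lemma fmul_constl c a n : fmul (fconst c) a n = c * a n.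
Proof.
rewrite /fmul big_ord_recl /= subn0 big1 ?addr0 // => i _.
by rewrite /fconst /= mul0r.
Qed.

Lemma fmul_shiftl (a c b : fps) n :
  (forall k, a k = if k is k'.+1 then c k' else 0) ->
  fmul a b n = if n is n'.+1 then fmul c b n' else 0.
Proof.
move=> Ha; rewrite /fmul; case: n => [|n].
  by rewrite big_ord1 Ha mul0r.
rewrite big_ord_recl Ha mul0r add0r; apply: eq_bigr => i _.
by rewrite Ha /= subSS.
Qed.

Lemma fs_shift k : fs k = if k is k'.+1 then fconst 1 k' else 0.
Proof. by case: k => [|[|k]]. Qed.

Lemma fmul_sl (a : fps) n : fmul fs a n = if n is n'.+1 then a n' else 0.
Proof.
rewrite (fmul_shiftl fs (fconst 1) a n fs_shift); case: n => // n.
by rewrite fmul_constl mul1r.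
Qed.

Lemma fmul_ssl (a : fps) n :
  fmul (fmul fs fs) a n = if n is n'.+2 then a n' else 0.
Proof.
rewrite (fmul_shiftl (fmul fs fs) fs a n); last by move=> k; rewrite fmul_sl.
by case: n => // n; rewrite fmul_sl.
Qed.

Definition jrec (F : nat -> fps) : Prop :=
  forall m, F m 0%N = 1 /\ F m 1%N = gam m /\
    forall L, F m L.+2 = gam m * F m L.+1
                         + lam m * \sum_(i < L.+1) F m i * F m.+1 (L - i)%N.

Lemma sys_coef (F : nat -> fps) m n :
  fmul (F m) (fsub (fsub (fconst 1) (fmul (fconst (gam m)) fs))
                     (fmul (fconst (lam m)) (fmul (fmul fs fs) (F m.+1)))) n
  = match n with
    | 0 => F m 0%N
    | 1 => F m 1%N - gam m * F m 0%N
    | L.+2 => F m L.+2 - gam m * F m L.+1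
              - lam m * \sum_(i < L.+1) F m i * F m.+1 (L - i)%N
    end.
Proof.
have G : forall k, fsub (fsub (fconst 1) (fmul (fconst (gam m)) fs))
                     (fmul (fconst (lam m)) (fmul (fmul fs fs) (F m.+1))) k =
   fconst 1 k - gam m * fs k - lam m * (if k is k'.+2 then F m.+1 k' else 0).
  by move=> k; rewrite /fsub !fmul_constl fmul_ssl.
rewrite [LHS]/fmul; case: n => [|[|L]].
- by rewrite big_ord1 G /fconst /fs /= !mulr0 !subr0 mulr1.
- rewrite big_ord_recr big_ord1 !G /fconst /fs /= !mulr0 !subr0 mulr1 sub0r.
  ring.
under eq_bigr => i _ do rewrite G.
rewrite big_ord_recr big_ord_recr /= subnn subSnn.
rewrite (eq_bigr (fun i : 'I_L.+1 => (- lam m) * (F m i * F m.+1 (L - i)%N))); last first.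
  move=> i _; rewrite /=.
  have -> : (L.+2 - i = (L - i).+2)%N by have := ltn_ord i; lia.
  rewrite /fconst /fs /=; ring.
rewrite -mulr_sumr /fconst /fs /=; ring.
Qed.

Lemma jfrac_jrec F : jfrac_system gam lam F -> jrec F.
Proof.
move=> HF m; have E n := etrans (esym (sys_coef F m n)) (HF m n).
have E0 := E 0%N; have E1 := E 1%N; rewrite /fconst /= in E0 E1.
rewrite E0 in E1; split => //; split.
  by apply/eqP; rewrite -subr_eq0 -E1 mulr1.
move=> L; have := E L.+2; rewrite /fconst /= => /eqP.
by rewrite subr_eq0 subr_eq addrC => /eqP.
Qed.

Lemma jrec_jfrac F : jrec F -> jfrac_system gam lam F.
Proof.
move=> HF m n; rewrite sys_coef; have [H0 [H1 H2]] := HF m.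
case: n => [|[|L]] /=; rewrite /fconst //.
  by rewrite H0 H1 mulr1 subrr.
by rewrite H2; ring.
Qed.

Lemma jrec_uniq F1 F2 : jrec F1 -> jrec F2 -> forall m n, F1 m n = F2 m n.
Proof.
move=> H1 H2.
suff : forall n m k, (k <= n)%N -> F1 m k = F2 m k by move=> S m n; exact: S.
elim=> [|n IH] m k.
  rewrite leqn0 => /eqP ->; by have [-> _] := H1 m; have [-> _] := H2 m.
rewrite leq_eqVlt => /orP [/eqP -> | ]; last by rewrite ltnS; exact: IH.
case: n IH => [|n] IH.
  by have [_ [-> _]] := H1 m; have [_ [-> _]] := H2 m.
have [_ [_ ->]] := H1 m; have [_ [_ ->]] := H2 m.
rewrite IH //; congr (_ + _ * _); apply: eq_bigr => i _.
by rewrite !IH //; have := ltn_ord i; lia.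
Qed.

Lemma A_S0 m L : A m L.+1 0 = A m L 0 * gam m + A m L 1 * dd m.
Proof. by rewrite /= !addn0 addr0. Qed.

Lemma jrec_A : jrec (fun m n => A m n 0%N).
Proof.
move=> m; split => //; split.
  by rewrite /= addn0 mul1r mul0r !addr0.
move=> L; rewrite A_S0 AD mulr_suml.
rewrite /lam mulr_sumr; congr (_ + _); first by rewrite mulrC.
apply: eq_bigr => i _; rewrite subSS /uu /dd; ring.
Qed.

Lemma jfrac_exists : exists F : nat -> fps, jfrac_system gam lam F.
Proof. by exists (fun m n => A m n 0%N); apply: jrec_jfrac; exact: jrec_A. Qed.

Set Implicit Arguments. Unset Strict Implicit. Unset Printing Implicit Defensive.

Definition ext L K (g : {ffun 'I_L -> 'I_K}) (c : 'I_K) : {ffun 'I_L.+1 -> 'I_K} :=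
  [ffun i => if unlift ord_max i is Some j then g j else c].

Definition splitf L K (f : {ffun 'I_L.+1 -> 'I_K}) : {ffun 'I_L -> 'I_K} * 'I_K :=
  ([ffun j => f (widen_ord (leqnSn L) j)], f ord_max).

Lemma fv_ext L K (g : {ffun 'I_L -> 'I_K}) c k :
  fv (ext g c) k = if k == L.+1 then nat_of_ord c else fv g k.
Proof.
case: k => [|k] //=; rewrite eqSS.
case: insubP => [i Hi Hv|Hn] /=.
  rewrite ffunE; case: unliftP => [j Hj|Hj].
    have Hk : (k < L)%N.
      by have := ltn_ord j; rewrite -Hv Hj /= /bump; case: leqP => /=; lia.
    rewrite (ltn_eqF Hk); case: insubP => [j' _ Hv'|]; last by rewrite Hk.
    suff -> : j' = j by []. apply: val_inj; rewrite Hv' -Hv Hj; exact: lift_max.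
  by rewrite -Hv Hj /= eqxx.
have Hk : (L < k)%N by move: Hn; rewrite ltnS -ltnNge.
rewrite (gtn_eqF Hk); case: insubP => [j' Hj' _|] //.
by move: Hj'; rewrite ltnNge (ltnW Hk).
Qed.

Lemma widen_lift L (j : 'I_L) : widen_ord (leqnSn L) j = lift ord_max j.
Proof. by apply: val_inj; rewrite /= /bump leqNgt ltn_ord add0n. Qed.

Lemma sum_ext L K (F : {ffun 'I_L.+1 -> 'I_K} -> {poly rat}) :
  \sum_f F f = \sum_(g : {ffun 'I_L -> 'I_K}) \sum_(c : 'I_K) F (ext g c).
Proof.
rewrite pair_big /=.
rewrite (reindex (fun p : {ffun 'I_L -> 'I_K} * 'I_K => ext p.1 p.2)) //.
exists (@splitf L K) => [[g c] _ | f _].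
  rewrite /splitf; congr (_, _).
    apply/ffunP => j; rewrite !ffunE.
    rewrite widen_lift.
    by rewrite liftK.
  by rewrite ffunE unlift_none.
apply/ffunP => i; rewrite /splitf ffunE /=.
case: unliftP => [j ->|->] //.
by rewrite ffunE widen_lift.
Qed.

Fixpoint Sk K (w : nat -> nat -> nat -> {poly rat}) L (b : nat) : {poly rat} :=
  if L is L'.+1 then \sum_(c < K) Sk K w L' c * w L' c b else (b == 0%N)%:R.

Lemma SkS K w L b : Sk K w L.+1 b = \sum_(c < K) Sk K w L c * w L c b.
Proof. by []. Qed.

Lemma ffun_path K (w : nat -> nat -> nat -> {poly rat}) L (b : nat) : (0 < K)%N ->
  \sum_(f : {ffun 'I_L -> 'I_K})
     (\prod_(j < L) w j (fv f j) (fv f j.+1)) * w L (fv f L) b = Sk K w L.+1 b.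
Proof.
case: K => [//|K] _.
elim: L b => [|L IH] b.
  set f0 : {ffun 'I_0 -> 'I_K.+1} := [ffun _ => ord0].
  rewrite (big_pred1 f0); last first.
    by move=> f; apply/esym/eqP/ffunP => [[]].
  rewrite big_ord0 mul1r /= big_ord_recl /= mul1r big1 ?addr0 // => i _.
  by rewrite mul0r.
rewrite sum_ext exchange_big [in RHS]SkS; apply: eq_bigr => c _.
rewrite -IH mulr_suml; apply: eq_bigr => g _.
rewrite big_ord_recr !fv_ext eqxx.
have -> : ((@ord_max L : nat) == L.+1) = false by exact: ltn_eqF (ltnSn L).
congr (_ * _ * _); apply: eq_bigr => j _; rewrite !fv_ext /= eqSS.
have Hj := ltn_ord j.
by rewrite (ltn_eqF Hj) (ltn_eqF (ltn_trans Hj (ltnSn L))).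
Qed.

Definition T (j a b : nat) : {poly rat} :=
  'X^((j - a) * (1 + b - a)) * (qbin (1 + a) b * qbin (1 + b) a).

Fixpoint H (L b : nat) : {poly rat} :=
  if L is L'.+1 then
    (if b is b'.+1 then H L' b' * T L' b' b else 0)
    + H L' b * T L' b b + H L' b.+1 * T L' b.+1 b
  else (b == 0%N)%:R.

Lemma H_gt L b : (L < b)%N -> H L b = 0.
Proof.
elim: L b => [|L IH] [|b] //= Hb.
rewrite !IH ?mul0r ?addr0 //; lia.
Qed.

Lemma T_far j a b : (a.+1 < b)%N || (b.+1 < a)%N -> T j a b = 0.
Proof.
case/orP => H; rewrite /T.
  by rewrite (@qbin_gt (1 + a) b) ?mul0r ?mulr0 // add1n.
by rewrite (@qbin_gt (1 + b) a) ?mul0r ?mulr0 // add1n.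
Qed.

Lemma sum_tri K b (g : nat -> {poly rat}) : (b < K)%N ->
  (forall c, (c.+1 < b)%N || (b.+1 < c)%N -> g c = 0) -> g K = 0 ->
  \sum_(c < K) g c = (if b is b'.+1 then g b' else 0) + g b + g b.+1.
Proof.
move=> bK Hg gK.
have -> : \sum_(c < K) g c = \sum_(c < K.+1) g c by rewrite big_ord_recr /= gK addr0.
have E : forall M, (b.+2 <= M)%N -> \sum_(c < M) g c = \sum_(c < b.+2) g c.
  elim=> [//|M IH]; rewrite leq_eqVlt => /orP [/eqP -> //|].
  rewrite ltnS => HM; rewrite big_ord_recr /= IH // Hg ?addr0 //.
  by apply/orP; right.
rewrite E //; case: b bK Hg {E} => [|b] bK Hg.
  by rewrite !big_ord_recr big_ord0 /= !add0r.
rewrite !big_ord_recr /= big1 ?add0r // => c _; apply: Hg.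
by apply/orP; left; rewrite ltnS.
Qed.

Lemma Sk_H K L b : (L <= K)%N -> (b < K)%N -> Sk K T L b = H L b.
Proof.
elim: L b => [//|L IH] b LK bK.
rewrite SkS (eq_bigr (fun c : 'I_K => H L c * T L c b)); last first.
  by move=> c _; rewrite IH // ltnW.
rewrite (@sum_tri K b (fun c => H L c * T L c b)) //.
- by move=> c Hc; rewrite T_far ?mulr0.
- by rewrite H_gt ?mul0r.
Qed.

Lemma fv_last L K (f : {ffun 'I_L -> 'I_K}) : fv f L.+1 = 0%N.
Proof. by rewrite /fv insubF // ltnn. Qed.

Lemma prodXn n (e : 'I_n -> nat) :
  \prod_(j < n) ('X^(e j) : {poly rat}) = 'X^(\sum_(j < n) e j).
Proof.
elim: n e => [|n IH] e; first by rewrite !big_ord0 expr0.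
by rewrite !big_ord_recr /= IH exprD.
Qed.

Lemma summand_T L (f : {ffun 'I_L -> 'I_L.+1}) :
  'X^(@hexp L.+1 f) * \prod_(k < L) (qbin (1 + fv f k) (fv f k.+1)
                                    * qbin (1 + fv f k.+2) (fv f k.+1))
  = \prod_(j < L.+1) T j (fv f j) (fv f j.+1).
Proof.
have E1 : (\sum_(j < L.+1) (j - fv f j) * (1 + fv f j.+1 - fv f j))%N = @hexp L.+1 f.
  by rewrite big_ord_recl /= mul0n add0n.
have E2 : \prod_(j < L.+1) qbin (1 + fv f j) (fv f j.+1) =
          \prod_(k < L) qbin (1 + fv f k) (fv f k.+1).
  by rewrite big_ord_recr fv_last qbin_m0 Monoid.mulm1.
have E3 : \prod_(j < L.+1) qbin (1 + fv f j.+1) (fv f j) =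
          \prod_(k < L) qbin (1 + fv f k.+2) (fv f k.+1).
  by rewrite big_ord_recl qbin_m0 Monoid.mul1m.
symmetry; rewrite /T.
rewrite (_ : \prod_(j < L.+1) ('X^((j - fv f j) * (1 + fv f j.+1 - fv f j)) *
      (qbin (1 + fv f j) (fv f j.+1) * qbin (1 + fv f j.+1) (fv f j))) =
   \prod_(j < L.+1) 'X^((j - fv f j) * (1 + fv f j.+1 - fv f j)) *
      (\prod_(j < L.+1) qbin (1 + fv f j) (fv f j.+1) *
       \prod_(j < L.+1) qbin (1 + fv f j.+1) (fv f j))); last by rewrite !big_split.
rewrite prodXn E1 E2 E3; congr (_ * _).
by rewrite big_split.
Qed.

Lemma h_H n : h n = H n 0.
Proof.
case: n => [|L].
  rewrite /h (big_pred1 [ffun i : 'I_0 => i]); last first.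
    by move=> f; apply/esym/eqP/ffunP => [[]].
  by rewrite /hexp !big_ord0 expr0 mulr1.
rewrite /h -(@Sk_H L.+1 L.+1 0) // -ffun_path //.
apply: eq_bigr => f _; rewrite summand_T big_ord_recr fv_last.
by [].
Qed.

Lemma qint_rev (x : rat) k : x != 0 ->
  (qint k.+1).[x^-1] = x^-1 ^+ k * (qint k.+1).[x].
Proof.
move=> Hx; elim: k => [|k IH]; first by rewrite qint1 !hornerE; ring.
rewrite [in LHS]qintSr [in RHS]qintSl !hornerE IH.
rewrite exprS; by field.
Qed.

Lemma B2_rev (x : rat) m : 0 < x ->
  (B2 m).[x^-1] = x^-1 ^+ (2 * m) * (B2 m).[x].
Proof.
move=> Hx; have Hx0 : x != 0 by rewrite gt_eqF.
have H1x : 1 + x != 0 by rewrite gt_eqF // ltr_wpDl.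
have E1 := congr1 (fun p => p.[x^-1]) (B2E m).
have E2 := congr1 (fun p => p.[x]) (B2E m).
rewrite /= !hornerE !qint_rev // in E1.
apply: (mulfI H1x); apply: (mulfI (invr_neq0 Hx0)).
have -> : x^-1 * ((1 + x) * (B2 m).[x^-1]) = (1 + x^-1) * (B2 m).[x^-1] by field.
rewrite E1 (_ : (2 * m = m + m)%N); last by lia.
rewrite /= !hornerE in E2.
rewrite (_ : (1 + x) * (x^-1 ^+ (m + m) * (B2 m).[x]) =
             x^-1 ^+ (m + m) * ((1 + x) * (B2 m).[x])); last by ring.
rewrite E2 exprD exprS; by field.
Qed.

Lemma gamE a : gam a = qint a.+1 ^+ 2.
Proof. by rewrite /gam qbin_1. Qed.

Lemma T_lev (x : rat) j a : 0 < x -> (a <= j)%N ->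
  (T j a a).[x^-1] = x^-1 ^+ (j + a) * (gam a).[x].
Proof.
move=> Hx Ha; have Hx0 : x != 0 by rewrite gt_eqF.
rewrite /T !add1n qbin_S1 subSnn muln1 gamE !hornerM hornerXn !qint_rev //.
rewrite (_ : (j + a = (j - a) + a + a)%N); last by lia.
rewrite !exprD; ring.
Qed.

Lemma T_up (x : rat) j a : 0 < x -> (a <= j)%N ->
  (T j a a.+1).[x^-1] = x^-1 ^+ (2 * j) * (B2 a).[x].
Proof.
move=> Hx Ha.
rewrite /T !add1n qbin_mm qbin_Sm mul1r hornerM hornerXn B2_rev //.
rewrite mulrA -exprD; congr (_ ^+ _ * _); lia.
Qed.

Lemma T_dn (x : rat) j a : 0 < x ->
  (T j a.+1 a).[x^-1] = x^-1 ^+ (2 * a) * (B2 a).[x].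
Proof.
move=> Hx.
rewrite /T !add1n qbin_Sm qbin_mm mulr1 subnn muln0 expr0 mul1r.
exact: B2_rev.
Qed.

Definition Tn (k : nat) : nat := ((k * k.-1) %/ 2)%N.

Lemma TnS k : Tn k.+1 = (Tn k + k)%N.
Proof.
rewrite /Tn /=.
have -> : (k.+1 * k = k * 2 + k * k.-1)%N by case: k => // k; rewrite /=; lia.
by rewrite divnMDl // addnC.
Qed.

Lemma Tn0 : Tn 0 = 0%N. Proof. by []. Qed.

Lemma HS L b : H L.+1 b = H L b * T L b b
    + (if b is b'.+1 then H L b' * T L b' b else 0) + H L b.+1 * T L b.+1 b.
Proof. by rewrite [LHS]/= [X in X + _ = _]addrC. Qed.

Lemma A0S L b : A 0 L.+1 b = A 0 L b * gam b
   + (if b is b'.+1 then A 0 L b' * uu b' else 0) + A 0 L b.+1 * dd b.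
Proof. by []. Qed.

Lemma gauge (x : rat) L b : 0 < x ->
  x^-1 ^+ (Tn b) * (H L b).[x^-1] = x^-1 ^+ (Tn L + L * b) * (A 0 L b).[x].
Proof.
move=> Hx; have Hx0 : x != 0 by rewrite gt_eqF.
have Xn k : x ^+ k != 0 by rewrite expf_neq0.
elim: L b => [|L IH] b.
  by case: b => [|b]; rewrite /= ?horner0 ?mulr0 ?mul0n ?hornerC ?mulr1 // hornerC.
have IH' b' : (H L b').[x^-1] = x ^+ Tn b' * (x^-1 ^+ (Tn L + L * b') * (A 0 L b').[x]).
  by rewrite -IH mulrA -exprMn mulfV // expr1n mul1r.
rewrite HS A0S !hornerD !mulrDr.
congr (_ + _ + _).
- case: (leqP b L) => Hb; last by rewrite H_gt // A_gt // !mul0r !horner0 !mulr0.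
  rewrite [in LHS]hornerM [in RHS]hornerM T_lev // IH' TnS mulSn.
  rewrite !exprVn !exprD; field; by rewrite ?Xn ?Hx0.
- case: b => [|b]; first by rewrite !horner0 !mulr0.
  case: (leqP b L) => Hb; last by rewrite H_gt // A_gt // !mul0r !horner0 !mulr0.
  rewrite [in LHS]hornerM [in RHS]hornerM T_up // /uu qbin_2 hornerM hornerX IH'.
  rewrite !mul2n -!addnn !TnS mulSn ?mulnS.
  rewrite !exprVn !exprD !exprS; field; by rewrite ?Xn ?Hx0.
- rewrite [in LHS]hornerM [in RHS]hornerM T_dn // /dd qbin_2 IH'.
  rewrite !mul2n -!addnn !TnS mulSn ?mulnS.
  rewrite !exprVn !exprD; field; by rewrite ?Xn ?Hx0.
Qed.

Lemma size_mulle (p q : {poly rat}) a c :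
  (size p <= a.+1)%N -> (size q <= c.+1)%N -> (size (p * q)%R <= (a + c).+1)%N.
Proof.
move=> Hp Hq; apply: leq_trans (size_polyMleq p q) _.
have := leq_add Hp Hq; rewrite addSn addnS /=; lia.
Qed.

Lemma size_addle (p q : {poly rat}) M :
  (size p <= M)%N -> (size q <= M)%N -> (size (p + q)%R <= M)%N.
Proof. by move=> Hp Hq; apply: leq_trans (size_polyD p q) _; rewrite geq_max Hp Hq. Qed.

Lemma size_qint k : (size (qint k) <= k)%N.
Proof.
elim: k => [|k IH]; first by rewrite qint0 size_poly0.
rewrite qintSr; apply: size_addle; first exact: leq_trans IH _.
by rewrite size_polyXn.
Qed.

Lemma size_B2 m : (size (B2 m) <= (2 * m).+1)%N.
Proof.
elim: m => [|m IH]; first by rewrite /= size_poly1.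
rewrite /=; apply: size_addle; first by apply: leq_trans IH _; lia.
have := @size_mulle 'X^(m.+1) (qint m.+2) m.+1 m.+1.
rewrite size_polyXn => /(_ (leqnn _) (size_qint _)) H.
by apply: leq_trans H _; lia.
Qed.

Lemma Tn_mono a c : (a <= c)%N -> (Tn a <= Tn c)%N.
Proof.
move=> /subnKC <-; elim: (c - a)%N => [|d IH]; first by rewrite addn0.
by rewrite addnS TnS; apply: leq_trans IH _; exact: leq_addr.
Qed.

Lemma deg_A L b : (size (A 0 L b) <= (Tn L + L * b - Tn b).+1)%N.
Proof.
elim: L b => [|L IH] b.
  by case: b => [|b] /=; rewrite ?size_poly1 ?size_poly0.
rewrite A0S; apply: size_addle; first apply: size_addle.
- case: (leqP b L) => Hb; last by rewrite A_gt // mul0r size_poly0.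
  have Hg : (size (gam b) <= (b + b).+1)%N.
    by rewrite gamE expr2; apply: size_mulle; exact: size_qint.
  apply: leq_trans (size_mulle (IH b) Hg) _.
  have := Tn_mono Hb; rewrite TnS mulSn; lia.
- case: b => [|b]; first by rewrite size_poly0.
  case: (leqP b L) => Hb; last by rewrite A_gt // mul0r size_poly0.
  have Hu : (size (uu b) <= (1 + 2 * b).+1)%N.
    rewrite /uu qbin_2; apply: size_mulle; last exact: size_B2.
    by rewrite size_polyX.
  apply: leq_trans (size_mulle (IH b) Hu) _.
  have := Tn_mono Hb; rewrite !TnS mulSn mulnS; lia.
- case: (leqP b.+1 L) => Hb; last by rewrite A_gt // mul0r size_poly0.
  have Hd : (size (dd b) <= (2 * b).+1)%N by rewrite /dd qbin_2; exact: size_B2.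
  apply: leq_trans (size_mulle (IH b.+1) Hd) _.
  have := Tn_mono Hb; rewrite !TnS mulSn mulnS; lia.
Qed.

Lemma poly_eq_pos (p q : {poly rat}) :
  (forall y : rat, 0 < y -> p.[y] = q.[y]) -> p = q.
Proof.
move=> Hpq; apply/eqP; rewrite -subr_eq0; apply/negPn/negP => Hne.
set rs := [seq (i.+1)%:R : rat | i <- iota 0 (size (p - q))].
have H1 : all (root (p - q)) rs.
  apply/allP => z /mapP [i _ ->]; rewrite /root hornerD hornerN Hpq ?subrr //.
have H2 : uniq rs.
  by rewrite map_inj_uniq ?iota_uniq // => i j /eqP; rewrite eqr_nat => /eqP [].
by have := max_poly_roots Hne H1 H2; rewrite size_map size_iota ltnn.
Qed.

Lemma htilde_A n : htilde n = A 0 n 0.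
Proof.
set a := A 0 n 0; set N := Tn n.
have Ha : (size a <= N.+1)%N.
  by have := deg_A n 0; rewrite muln0 addn0 subn0.
set r := \poly_(i < N.+1) a`_(N - i).
have Hr : h n = r.
  apply: poly_eq_pos => y Hy.
  have Hx : 0 < y^-1 by rewrite invr_gt0.
  have := gauge n 0 Hx; rewrite invrK h_H Tn0 expr0 mul1r => ->.
  rewrite muln0 addn0 horner_poly (horner_coef_wide _ Ha) mulr_sumr.
  rewrite (reindex_inj rev_ord_inj) /=; apply: eq_bigr => i _.
  have Hi : (i <= N)%N by rewrite -ltnS.
  rewrite subSS -/N -{1}(subnK Hi) exprD.
  have E : y ^+ (N - i) * y^-1 ^+ (N - i) = 1.
    by rewrite -exprMn mulfV ?expr1n // gt_eqF.
  by rewrite -[RHS]mulr1 -E; ring.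
rewrite /htilde /= -/N Hr; apply/polyP => k.
rewrite coef_poly; case: ifP => Hk.
  by rewrite coef_poly ltnS leq_subr subKn // -ltnS.
by apply/esym/(leq_sizeP _ _ Ha); rewrite leqNgt Hk.
Qed.


Theorem theorem3p2 :
  (exists F : nat -> fps, jfrac_system gam lam F) /\
  (forall F : nat -> fps, jfrac_system gam lam F ->
     forall n : nat, F 0%N n = htilde n).
Proof.
split; first exact: jfrac_exists.
move=> F HF n; rewrite htilde_A.
exact: (jrec_uniq _ _ (jfrac_jrec _ HF) jrec_A 0 n).
Qed.
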